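(* For any finite quasi-discrete closure model $\mathcal{M}=((X,\mathcal{C}_R),\mathcal{V})$, any collective formula $\psi$ with $\mathit{size}(\psi)=k$, and any $A\subseteq X$, we have $\mathtt{Sat}_C(\mathcal{M},A,\psi)=\mathit{True}$ if and only if $\mathcal{M},A\models_C\psi$, and the computation takes in the worst case $\mathcal{O}(k\cdot(|X|+|R|))$ steps.
   Context: For $R\subseteq X\times X$, $\mathcal{C}_R(A)=A\cup\{x\mid\exists a\in A.(a,x)\in R\}$; a finite quasi-discrete closure model is $((X,\mathcal{C}_R),\mathcal{V})$ with $X$ finite and $\mathcal{V}:AP\to 2^X$. Paths are continuous maps $p:(\mathbb{N},\mathcal{C}_\succ)\to(X,\mathcal{C}_R)$ with $\succ=\{(n,n+1)\}$ (continuity: $p(\mathcal{C}_\succ(S))\subseteq\mathcal{C}_R(p(S))$); equivalently, sequences in which each consecutive pair is equal or in $R$. A set $B\subseteq X$ is path-connected if for all $x,y\in B$ there are a path $p$ and $i$ with $p(0)=x$, $p(i)=y$ and $p(j)\in B$ for all $j\le i$. SLCS formulas $\phi$ ($\Phi::=a\mid\top\mid\lnot\Phi\mid\Phi\land\Phi\mid\mathcal{N}\Phi\mid\Phi\,\mathcal{S}\,\Phi\mid\Phi\rightsquigarrow\Phi$) have individual satisfaction $\mathcal{M},x\models\phi$: $x\models a$ iff $x\in\mathcal{V}(a)$; boolean connectives classically; $x\models\mathcal{N}\phi$ iff $x\in\mathcal{C}_R(\{y\mid y\models\phi\})$; $x\models\phi_1\,\mathcal{S}\,\phi_2$ iff $x\models\phi_1$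 and for every path $p$ with $p(0)=x$ and every $l$, if $p(l)\models\lnot\phi_1$ then some $0<k\le l$ has $p(k)\models\phi_2$; $x\models\phi_1\rightsquigarrow\phi_2$ iff $x\models\phi_2$ and there are $y$, a path $p$ and $l$ with $p(0)=y$, $p(l)=x$, $y\models\phi_1$ and $p(i)\models\phi_2$ for $0<i<l$. Collective formulas: $\Psi::=\top\mid\lnot\Psi\mid\Psi\land\Psi\mid\phi\multimap\Psi\mid\mathcal{G}\phi$, with $\mathcal{M},A\models_C\top$ always, $\lnot,\land$ classically, $\mathcal{M},A\models_C\phi\multimap\psi$ iff $\mathcal{M},\{x\in A\mid x\models\phi\}\models_C\psi$, and $\mathcal{M},A\models_C\mathcal{G}\phi$ iff there is a path-connected $B\supseteq A$ with $z\models\phi$ for all $z\in B$. Size: for SLCS, $\mathit{size}(\top)=\mathit{size}(a)=1$, $\mathit{size}(\lnot\phi)=\mathit{size}(\mathcal{N}\phi)=1+\mathit{size}(\phi)$, binary operators $1+$ sum of sizes; for collective formulas, $\mathit{size}(\top)=1$, $\mathit{size}(\lnot\psi)=1+\mathit{size}(\psi)$, $\mathit{size}(\mathcal{G}\phi)=1+\mathit{size}(\phi)$, $\mathit{size}(\psi_1\land\psi_2)=1+\mathit{size}(\psi_1)+\mathit{size}(\psi_2)$, $\mathit{size}(\phi\multimap\psi)=1+\mathit{size}(\phi)+\mathit{size}(\psi)$. $\mathtt{Sat}(\mathcal{M},\phi)$ denotes a procedure returning $\{x\mid\mathcal{M},x\models\phi\}$ in $\mathcal{O}(\mathit{size}(\phi)(|X|+|R|))$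 steps. The procedure $\mathtt{Sat}_C(\mathcal{M},A,\psi)$: $\top\mapsto\mathit{True}$; $\lnot\psi_1\mapsto$ negation of $\mathtt{Sat}_C(\mathcal{M},A,\psi_1)$; $\psi_1\land\psi_2\mapsto$ conjunction of the two recursive results; $\phi\multimap\psi_1\mapsto\mathtt{Sat}_C(\mathcal{M},\mathtt{Sat}(\mathcal{M},\phi)\cap A,\psi_1)$; for $\mathcal{G}\phi$: if $A=\emptyset$ return $\mathit{True}$; let $B=\mathtt{Sat}(\mathcal{M},\phi)$; if $A\not\subseteq B$ return $\mathit{False}$; otherwise pick $x\in A$ and run Tarjan's strongly-connected-components depth-first search from $x$ in the directed graph $(X,R)$, following only edges $(u,v)\in R$ with $v\in B$; each time a strongly connected component $C$ is completed, if $A\cap C\neq\emptyset$ the procedure returns the truth value of $A\subseteq C$, otherwise the search continues. *)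

(* Defs.v *)
From mathcomp Require Import all_boot.
Set Implicit Arguments.
Unset Strict Implicit.
Unset Printing Implicit Defensive.

Inductive slcs (AP : Type) : Type :=
  | SAtom of AP
  | STrue
  | SNot of slcs AP
  | SAnd of slcs AP & slcs AP
  | SNear of slcs AP
  | SSurr of slcs AP & slcs AP
  | SReach of slcs AP & slcs AP.
Arguments STrue {AP}.

Inductive cform (AP : Type) : Type :=
  | CTrue
  | CNot of cform AP
  | CAnd of cform AP & cform AP
  | CImp of slcs AP & cform AP
  | CGroup of slcs AP.
Arguments CTrue {AP}.

Fixpoint ssize (AP : Type) (f : slcs AP) : nat :=
  match f with
  | SAtom _ | STrue => 1
  | SNot g | SNear g => (ssize g).+1
  | SAnd g h | SSurr g h | SReach g h => (ssize g + ssize h).+1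
  end.

Fixpoint csize (AP : Type) (f : cform AP) : nat :=
  match f with
  | CTrue => 1
  | CNot g => (csize g).+1
  | CAnd g h => (csize g + csize h).+1
  | CImp phi g => (ssize phi + csize g).+1
  | CGroup phi => (ssize phi).+1
  end.

Definition clo (T : Type) (Rel : T -> T -> Prop) (S : T -> Prop) : T -> Prop :=
  fun x => S x \/ exists a, S a /\ Rel a x.

Definition nat_succ (n m : nat) : Prop := m = n.+1.

(* continuity of p : (N, C_succ) -> (X, C_R):  p(C_succ(S)) <= C_R(p(S)) *)
Definition is_path (X : finType) (R : rel X) (p : nat -> X) : Prop :=
  forall (S : nat -> Prop) (y : X),
    (exists n, clo nat_succ S n /\ p n = y) ->
    clo (fun u v => R u v) (fun z => exists m, S m /\ p m = z) y.

Definition path_connected (X : finType) (R : rel X) (B : X -> Prop) : Prop :=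
  forall x y, B x -> B y ->
    exists p i, is_path R p /\ p 0 = x /\ p i = y /\ forall j, j <= i -> B (p j).

Fixpoint sem (AP : Type) (X : finType) (R : rel X) (V : AP -> {set X})
    (f : slcs AP) : X -> Prop :=
  match f with
  | SAtom a => fun x => x \in V a
  | STrue => fun _ => True
  | SNot g => fun x => ~ sem R V g x
  | SAnd g h => fun x => sem R V g x /\ sem R V h x
  | SNear g => clo (fun u v => R u v) (sem R V g)
  | SSurr g h => fun x =>
      sem R V g x /\
      forall p : nat -> X, is_path R p -> p 0 = x ->
        forall l, ~ sem R V g (p l) ->
          exists k, 0 < k <= l /\ sem R V h (p k)
  | SReach g h => fun x =>
      sem R V h x /\
      exists (y : X) (p : nat -> X) (l : nat),
        is_path R p /\ p 0 = y /\ p l = x /\ sem R V g y /\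
        forall i, 0 < i < l -> sem R V h (p i)
  end.

Fixpoint csem (AP : Type) (X : finType) (R : rel X) (V : AP -> {set X})
    (f : cform AP) : (X -> Prop) -> Prop :=
  match f with
  | CTrue => fun _ => True
  | CNot g => fun A => ~ csem R V g A
  | CAnd g h => fun A => csem R V g A /\ csem R V h A
  | CImp phi g => fun A => csem R V g (fun x => A x /\ sem R V phi x)
  | CGroup phi => fun A =>
      exists B : X -> Prop, (forall x, A x -> B x) /\ path_connected R B /\
        forall z, B z -> sem R V phi z
  end.

Definition nedges (X : finType) (R : rel X) : nat :=
  #|[set e : X * X | R e.1 e.2]|.

(* Cost model: the graph is accessed through adjacency lists (one step  *)
(* per edge (v,w) in R scanned), membership tests in A, B, on-stack are *)
(* O(1) (bitmaps), whole-set operations on subsets of X (emptiness,     *)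
(* inclusion, intersection, picking an element) cost |X| steps, and a   *)
(* call to the oracle Sat(M, phi) costs satc phi steps.                 *)

Section Tarjan.
Variables (X : finType) (R : rel X) (B A : {set X}).

Record tstate := TSt {
  t_idx : X -> option nat;   (* DFS index, None = unvisited *)
  t_low : X -> nat;
  t_stk : seq X;             (* Tarjan stack (top first) *)
  t_cnt : nat;
  t_cost : nat
}.

Inductive toutcome :=
  | TFound of bool & nat     (* early return with its value and total cost *)
  | TCont of tstate.

Definition upd (T : Type) (f : X -> T) (v : X) (a : T) : X -> T :=
  fun y => if y == v then a else f y.

Definition adj (v : X) : seq X := [seq w <- enum X | R v w].

(* Tarjan's strongconnect(v), following only edges (v,w) in R with w in B;
   when an SCC C is completed: if A :&: C != set0 return (A \subset C),
   otherwise continue the search. *)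
Fixpoint tvisit (fuel : nat) (v : X) (s : tstate) : toutcome :=
  match fuel with
  | 0 => TFound false (t_cost s)
  | fuel'.+1 =>
    let iv := t_cnt s in
    let s1 := TSt (upd (t_idx s) v (Some iv)) (upd (t_low s) v iv)
                  (v :: t_stk s) iv.+1 (t_cost s).+1 in
    let fix tedges (ws : seq X) (s : tstate) : toutcome :=
      match ws with
      | [::] => TCont s
      | w :: ws' =>
        let s := TSt (t_idx s) (t_low s) (t_stk s) (t_cnt s) (t_cost s).+1 in
        if w \notin B then tedges ws' s else
        match t_idx s w with
        | None =>
          match tvisit fuel' w s with
          | TFound b c => TFound b c
          | TCont s' =>
            tedges ws' (TSt (t_idx s')
                         (upd (t_low s') v (minn (t_low s' v) (t_low s' w)))
                         (t_stk s') (t_cnt s') (t_cost s'))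
          end
        | Some iw =>
          if w \in t_stk s then
            tedges ws' (TSt (t_idx s) (upd (t_low s) v (minn (t_low s v) iw))
                            (t_stk s) (t_cnt s) (t_cost s))
          else tedges ws' s
        end
      end in
    match tedges (adj v) s1 with
    | TFound b c => TFound b c
    | TCont s2 =>
      if t_low s2 v == iv then
        let C := take (index v (t_stk s2)).+1 (t_stk s2) in
        let rest := drop (index v (t_stk s2)).+1 (t_stk s2) in
        let c := t_cost s2 + (size C).+1 in
        if has (fun y => y \in A) C then TFound [forall a in A, a \in C] c
        else TCont (TSt (t_idx s2) (t_low s2) rest (t_cnt s2) c)
      else TCont s2
    end
  end.

Definition tinit : tstate := TSt (fun _ => None) (fun _ => 0) [::] 0 0.

Definition tarjan_from (x : X) : bool * nat :=
  match tvisit #|X|.+1 x tinit with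
  | TFound b c => (b, c)
  | TCont s => (false, t_cost s)
  end.

End Tarjan.

(* Sat_C(M, A, psi): returns (truth value, number of steps).
   [sat] is the procedure Sat(M, .) and [satc phi] its number of steps. *)
Fixpoint SatC (AP : Type) (X : finType) (R : rel X)
    (sat : slcs AP -> {set X}) (satc : slcs AP -> nat)
    (A : {set X}) (f : cform AP) : bool * nat :=
  match f with
  | CTrue => (true, 1)
  | CNot g => let r := SatC R sat satc A g in (~~ r.1, r.2.+1)
  | CAnd g h =>
      let r1 := SatC R sat satc A g in
      let r2 := SatC R sat satc A h in
      (r1.1 && r2.1, (r1.2 + r2.2).+1)
  | CImp phi g =>
      let r := SatC R sat satc (sat phi :&: A) g in
      (r.1, r.2 + satc phi + #|X|.+1)
  | CGroup phi =>
      if A == set0 then (true, #|X|.+1) else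
      let B := sat phi in
      if ~~ (A \subset B) then (false, satc phi + #|X| + #|X|.+1) else
      match [pick x in A] with
      | None => (false, satc phi + #|X| + #|X|.+1)
      | Some x =>
          let r := tarjan_from R B A x in
          (r.1, satc phi + #|X| + #|X| + #|X|.+1 + r.2)
      end
  end.

(* Main.v *)
Require Import Defs.
From mathcomp Require Import all_boot.
From mathcomp Require Import zify.
Set Implicit Arguments.
Unset Strict Implicit.
Unset Printing Implicit Defensive.

Section Tar.
Variables (X : finType) (R : rel X) (B A : {set X}).

Definition tedgesF (fuel' : nat) (v : X) :=
    fix tedges (ws : seq X) (s : tstate X) : toutcome X :=
      match ws with
      | [::] => TCont s
      | w :: ws' =>
        let s := TSt (t_idx s) (t_low s) (t_stk s) (t_cnt s) (t_cost s).+1 in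
        if w \notin B then tedges ws' s else
        match t_idx s w with
        | None =>
          match tvisit R B A fuel' w s with
          | TFound b c => TFound _ b c
          | TCont s' =>
            tedges ws' (TSt (t_idx s')
                         (upd (t_low s') v (minn (t_low s' v) (t_low s' w)))
                         (t_stk s') (t_cnt s') (t_cost s'))
          end
        | Some iw =>
          if w \in t_stk s then
            tedges ws' (TSt (t_idx s) (upd (t_low s) v (minn (t_low s v) iw))
                            (t_stk s) (t_cnt s) (t_cost s))
          else tedges ws' s
        end
      end.

Definition popstep (v : X) (iv : nat) (r : toutcome X) : toutcome X :=
    match r with
    | TFound b c => TFound _ b c
    | TCont s2 =>
      if t_low s2 v == iv then
        let C := take (index v (t_stk s2)).+1 (t_stk s2) in
        let rest := drop (index v (t_stk s2)).+1 (t_stk s2) in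
        let c := t_cost s2 + (size C).+1 in
        if has (fun y => y \in A) C then TFound _ [forall a in A, a \in C] c
        else TCont (TSt (t_idx s2) (t_low s2) rest (t_cnt s2) c)
      else TCont s2
    end.

Definition s1of (v : X) (s : tstate X) :=
  TSt (upd (t_idx s) v (Some (t_cnt s))) (upd (t_low s) v (t_cnt s))
                  (v :: t_stk s) (t_cnt s).+1 (t_cost s).+1.

Lemma tvisitS f v s :
  tvisit R B A f.+1 v s = popstep v (t_cnt s) (tedgesF f v (adj R v) (s1of v s)).
Proof. reflexivity. Qed.

Definition Psi (s : tstate X) := \sum_(y | t_idx s y == None) (3 + size (adj R y)).

Definition pot (s : tstate X) := t_cost s + size (t_stk s) + Psi s.

Lemma Psi_s1 v s : t_idx s v = None -> Psi s = Psi (s1of v s) + (3 + size (adj R v)).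
Proof.
move=> hv; rewrite /Psi (bigD1 v) /=; last by rewrite hv.
rewrite addnC; congr (_ + _); apply: eq_bigl => y /=.
rewrite /upd; case: (y =P v) => [->|_] /=; by rewrite ?hv ?andbF ?andbT.
Qed.

Definition cost_spec (s : tstate X) (r : toutcome X) (extra : nat) :=
  match r with
  | TFound _ c => c <= pot s + extra
  | TCont s' => pot s' <= pot s + extra
  end.

Lemma cost_visit f : forall v s, t_idx s v = None -> cost_spec s (tvisit R B A f v s) 0.
Proof.
elim: f => [|f IH] v s hv.
  by rewrite /cost_spec /pot /=; lia.
have Hed : forall ws t, cost_spec t (tedgesF f v ws t) (size ws).
  elim=> [|w ws IHw] t /=; first by rewrite /cost_spec; lia.
  set t' := TSt _ _ _ _ _.
  have Ht' : pot t' = (pot t).+1 := erefl.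
  case: ifP => _.
    by move: (IHw t'); rewrite /cost_spec; case: (tedgesF _ _ _ _) => [b c|s']; lia.
  case E: (t_idx t w) => [iw|].
    case: ifP => _.
      set t3 := (TSt (t_idx t') (upd (t_low t') v (minn (t_low t' v) iw)) (t_stk t') (t_cnt t') (t_cost t')).
      have H3 : pot t3 = pot t' := erefl.
      move: (IHw t3).
      by rewrite /cost_spec; case: (tedgesF _ _ _ _) => [b c|s']; lia.
    by move: (IHw t'); rewrite /cost_spec; case: (tedgesF _ _ _ _) => [b c|s']; lia.
  move: (IH w t' E); rewrite /cost_spec.
  case: (tvisit _ _ _ _ _ _) => [b c|s'] Hc; first lia.
  set t2 := TSt _ _ _ _ _.
  have H2 : pot t2 = pot s' := erefl.
  by move: (IHw t2); rewrite /cost_spec; case: (tedgesF _ _ _ _) => [b c|s'']; lia.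
rewrite tvisitS.
have Hp : pot s = pot (s1of v s) + size (adj R v) + 1.
  by rewrite /pot (Psi_s1 hv) /=; lia.
move: (Hed (adj R v) (s1of v s)); rewrite /cost_spec /popstep.
case: (tedgesF _ _ _ _) => [b c|s2] Hc; first lia.
case: ifP => _; last lia.
have Hsz := cat_take_drop (index v (t_stk s2)).+1 (t_stk s2).
have Hsz' : size (take (index v (t_stk s2)).+1 (t_stk s2)) + size (drop (index v (t_stk s2)).+1 (t_stk s2)) = size (t_stk s2).
  by rewrite -size_cat Hsz.
case: ifP => _; rewrite /pot /=; move: Hc Hp; rewrite /pot. all: try lia.
change (Psi (TSt _ _ _ _ _)) with (Psi s2); lia.
Qed.


Definition E : rel X := [rel u w | R u w && (w \in B)].

Definition Inv (s : tstate X) :=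
 [/\ (forall y n, t_idx s y = Some n -> n < t_cnt s),
     (forall y, y \in t_stk s -> t_idx s y != None),
     (forall y z, t_idx s y != None -> y \notin t_stk s -> E y z ->
        t_idx s z != None /\ z \notin t_stk s)
   & (forall y, y \in A -> t_idx s y != None -> y \in t_stk s)].

Definition unv (s : tstate X) := #|[set y | t_idx s y == None]|.

Definition newv (s s' : tstate X) y := (t_idx s y == None) && (t_idx s' y != None).

Definition goodA := forall a a', a \in A -> a' \in A -> connect E a a'.

Record PostV (v : X) (s s' : tstate X) : Prop := {
 pv_inv : Inv s';
 pv_idx : forall y n, t_idx s y = Some n -> t_idx s' y = Some n;
 pv_v : t_idx s' v = Some (t_cnt s);
 pv_new : forall y n, t_idx s y = None -> t_idx s' y = Some n -> t_cnt s <= n;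
 pv_cnt : t_cnt s < t_cnt s';
 pv_stk : exists P, t_stk s' = P ++ t_stk s /\ forall y, y \in P -> newv s s' y;
 pv_low : (t_low s' v = t_cnt s /\ t_stk s' = t_stk s) \/
          exists u k, [/\ u \in t_stk s, t_idx s u = Some k, t_low s' v = k & connect E v u];
 pv_rch : forall y, newv s s' y -> y \in t_stk s' -> exists u k k',
          [/\ u \in t_stk s', t_idx s' u = Some k, t_idx s' y = Some k', k < k' & connect E y u];
 pv_reach : forall y, newv s s' y -> connect E v y;
 pv_edge : forall y z, newv s s' y -> E y z -> t_idx s' z != None /\
          (forall k, t_idx s z = Some k -> z \in t_stk s -> t_low s' v <= k);
 pv_lowp : forall y, t_idx s y != None -> t_low s' y = t_low s y
}.

Record Jr (v : X) (s0 : tstate X) (idx : X -> option nat) (low : X -> nat)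
   (stk : seq X) (cnt : nat) (fl : nat) : Prop := {
 j_inv : Inv (TSt idx low stk cnt 0);
 j_inv0 : Inv s0;
 j_v0 : t_idx s0 v = None;
 j_idx : forall y n, t_idx s0 y = Some n -> idx y = Some n;
 j_v : idx v = Some (t_cnt s0);
 j_new : forall y n, t_idx s0 y = None -> idx y = Some n -> t_cnt s0 <= n;
 j_cnt : t_cnt s0 < cnt;
 j_stk : exists P, stk = P ++ v :: t_stk s0 /\ forall y, y \in P -> (t_idx s0 y == None) && (idx y != None) /\ y != v;
 j_lowle : low v <= t_cnt s0;
 j_low : low v = t_cnt s0 \/
          exists u k, [/\ u \in t_stk s0, t_idx s0 u = Some k, low v = k & connect E v u];
 j_rch : forall y, (t_idx s0 y == None) && (idx y != None) -> y != v -> y \in stk -> exists u k k',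
          [/\ u \in stk, idx u = Some k, idx y = Some k', k < k' & connect E y u];
 j_reach : forall y, (t_idx s0 y == None) && (idx y != None) -> connect E v y;
 j_edge : forall y z, (t_idx s0 y == None) && (idx y != None) -> y != v -> E y z -> idx z != None /\
          (forall k, t_idx s0 z = Some k -> z \in t_stk s0 -> low v <= k);
 j_lowp : forall y, t_idx s0 y != None -> low y = t_low s0 y;
 j_fuel : #|[set y | idx y == None]| <= fl
}.

Definition J v s0 (t : tstate X) fl := Jr v s0 (t_idx t) (t_low t) (t_stk t) (t_cnt t) fl.

Definition Scanned v (s0 t : tstate X) w :=
  E v w -> t_idx t w != None /\
  (forall k, t_idx s0 w = Some k -> w \in t_stk s0 -> t_low t v <= k).

Definition vspec (v : X) (s : tstate X) (r : toutcome X) :=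
  match r with
  | TFound b _ => (b = true <-> goodA)
  | TCont s' => PostV v s s'
  end.

Lemma conn_closed (Q : X -> Prop) x y :
  (forall u w, Q u -> E u w -> Q w) -> Q x -> connect E x y -> Q y.
Proof.
move=> HQ Qx /connectP [p pth ->].
elim: p x Qx pth => [|a p IH] x Qx //= /andP [exa pth].
exact: IH (HQ _ _ Qx exa) pth.
Qed.

Lemma unv_mono (t t' : tstate X) :
  (forall y n, t_idx t y = Some n -> t_idx t' y = Some n) -> unv t' <= unv t.
Proof.
move=> H; apply: subset_leq_card; apply/subsetP => y; rewrite !inE => /eqP h.
apply/eqP; case E1: (t_idx t y) => [n|] //; by rewrite (H _ _ E1) in h.
Qed.

Lemma unv_s1 v s : t_idx s v = None -> unv (s1of v s) < unv s.
Proof.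
move=> hv; apply: proper_card; apply/properP; split.
  apply/subsetP => y; rewrite !inE /= /upd; case: (y =P v) => //= ->; by rewrite hv.
by exists v; rewrite !inE /= /upd ?eqxx ?hv.
Qed.

Lemma mem_adj v w : (w \in adj R v) = R v w.
Proof. by rewrite /adj mem_filter mem_enum andbT. Qed.

Lemma inv_s1 v s : Inv s -> t_idx s v = None -> Inv (s1of v s).
Proof.
case=> I1 I2 I3 I4 hv; split => /=.
- move=> y n; rewrite /upd; case: (y =P v) => [_ [<-] // | _ /I1 /ltnW //].
- move=> y; rewrite inE /upd; case: (y =P v) => //= _ /I2 //.
- move=> y z; rewrite /upd inE; case: (y =P v) => //= _ hy hny eyz.
  have [hz hnz] := I3 _ _ hy hny eyz.
  case: (z =P v) => [ez|/eqP zv]; first by rewrite ez hv in hz.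
  by rewrite inE (negbTE zv).
- move=> y yA; rewrite /upd inE; case: (y =P v) => //= _ /(I4 _ yA) //.
Qed.

Lemma newv_s1 v s y : newv s (s1of v s) y -> y = v.
Proof.
rewrite /newv /= /upd; case: (y =P v) => // _ /andP [/eqP -> ]; by [].
Qed.

Lemma J_init v s f : Inv s -> t_idx s v = None -> unv s <= f.+1 -> J v s (s1of v s) f.
Proof.
move=> Is hv hf; have Is1 := inv_s1 Is hv.
have Is' := Is; case: Is' => I1 I2 I3 I4.
constructor => //=.
- move=> y n h; rewrite /upd; case: (y =P v) => [e|//]; by rewrite e hv in h.
- by rewrite /upd eqxx.
- move=> y n hy; rewrite /upd; case: (y =P v) => [_ [<-] //|_]; by rewrite hy.
- by exists [::].
- by rewrite /upd eqxx.
- by left; rewrite /upd eqxx.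
- move=> y hn yv; rewrite inE (negbTE yv) /= => /I2 hy.
  by move: hn; rewrite /upd (negbTE yv) (negbTE hy).
- by move=> y /newv_s1 ->.
- by move=> y z /newv_s1 -> ; rewrite eqxx.
- move=> y hy; rewrite /upd; case: (y =P v) => // e; by rewrite e hv in hy.
- have := unv_s1 hv; move: hf; rewrite /unv /=; lia.
Qed.


Definition bump (t : tstate X) := TSt (t_idx t) (t_low t) (t_stk t) (t_cnt t) (t_cost t).+1.
Definition setlow (t : tstate X) v n := TSt (t_idx t) (upd (t_low t) v n) (t_stk t) (t_cnt t) (t_cost t).

Lemma tedges_cons f v w ws t : tedgesF f v (w :: ws) t =
  if w \notin B then tedgesF f v ws (bump t) else
  match t_idx t w with
  | None => match tvisit R B A f w (bump t) with
            | TFound b c => TFound _ b c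
            | TCont s' => tedgesF f v ws (setlow s' v (minn (t_low s' v) (t_low s' w)))
            end
  | Some iw => if w \in t_stk t then tedgesF f v ws (setlow (bump t) v (minn (t_low t v) iw))
               else tedgesF f v ws (bump t)
  end.
Proof. reflexivity. Qed.

Lemma scanned_mono v s0 t t' w : Scanned v s0 t w ->
  (forall y n, t_idx t y = Some n -> t_idx t' y = Some n) -> t_low t' v <= t_low t v ->
  Scanned v s0 t' w.
Proof.
move=> S Hi Hl e; have [h1 h2] := S e; split.
- case E1: (t_idx t w) h1 => [n|] // _; by rewrite (Hi _ _ E1).
- move=> k h3 h4; exact: leq_trans Hl (h2 k h3 h4).
Qed.

Lemma edges_ok f v s0 :
  (forall w s, Inv s -> unv s <= f -> t_idx s w = None -> vspec w s (tvisit R B A f w s)) ->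
  forall ws t, (forall w, w \in ws -> R v w) -> J v s0 t f ->
  (forall w, w \notin ws -> Scanned v s0 t w) ->
  match tedgesF f v ws t with
  | TFound b _ => (b = true <-> goodA)
  | TCont t' => J v s0 t' f /\ forall w, Scanned v s0 t' w
  end.
Proof.
move=> IHf; elim=> [|w ws IHws] t Hws Jt Sc.
  by split => // w; apply: Sc.
have Hws' : forall w0, w0 \in ws -> R v w0.
  by move=> w0 h; apply: Hws; rewrite inE h orbT.
have Rvw : R v w by apply: Hws; rewrite inE eqxx.
have Sc' : forall t', (forall y n, t_idx t y = Some n -> t_idx t' y = Some n) ->
   t_low t' v <= t_low t v -> Scanned v s0 t' w ->
   forall w0, w0 \notin ws -> Scanned v s0 t' w0.
  move=> t' Hi Hl Sw w0 hw0; case: (w0 =P w) => [->|/eqP ne] //.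
  apply: scanned_mono Hi Hl; apply: Sc; by rewrite inE negb_or ne hw0.
have Jt0 := Jt.
case: Jt0 => Ji Ji0 Jv0 Jidx Jv Jnew Jcnt [P [HP HPn]] Jlowle Jlow Jrch Jreach Jedge Jlowp Jfuel.
have Ji0' := Ji0; case: Ji0' => I01 I02 I03 I04.
rewrite tedges_cons.
case: ifP => [wnB | /negbFE wB].
  apply: IHws => //; apply: Sc' => //.
  by move=> /andP [_ wB]; rewrite wB in wnB.
case Ew: (t_idx t w) => [iw|].
  case: ifP => [wS|wnS].
  -
    have Hlow3 : t_low (setlow (bump t) v (minn (t_low t v) iw)) v = minn (t_low t v) iw.
      by rewrite /= /upd eqxx.
    apply: IHws => //.
    + constructor => //=; rewrite ?/upd ?eqxx.
      * by exists P.
      * exact: leq_trans (geq_minl _ _) Jlowle.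
      * case: (leqP (t_low t v) iw) => h.
          by [].
        right.
        move: wS; rewrite HP mem_cat inE => /orP [wP|/orP [/eqP wv|wS0]].
        - have [/andP [/eqP h0 _] _] := HPn _ wP.
          have := Jnew _ _ h0 Ew; lia.
        - by move: Ew; rewrite wv Jv => -[ei]; lia.
        have := I02 _ wS0; case Ew0: (t_idx s0 w) => [k|] // _.
        move: (Jidx _ _ Ew0); rewrite Ew => -[ek]; subst k.
        exists w, iw; split => //; apply: connect1; by rewrite /E /= Rvw wB.
      * move=> y z hy yv eyz; have [h1 h2] := Jedge _ _ hy yv eyz; split => // k hk hs.
        exact: leq_trans (geq_minl _ _) (h2 k hk hs).
      * move=> y hy; case: (y =P v) => [e|_]; last exact: Jlowp.
        by rewrite e Jv0 in hy.
    + apply: Sc' => //=.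
      * by rewrite /upd eqxx geq_minl.
      * move=> _; split; first by rewrite Ew.
        move=> k hk _; move: (Jidx _ _ hk); rewrite Ew => -[->].
        by rewrite /= /upd eqxx geq_minr.
  -
    apply: IHws => //; apply: Sc' => // _; split; first by rewrite Ew.
    move=> k _ hs; by rewrite HP mem_cat inE hs !orbT in wnS.
have := IHf w (bump t) Ji Jfuel Ew.
case: (tvisit R B A f w (bump t)) => [b c|s'] // Pv.
case: Pv => Pi Pidx Pv Pnew Pcnt [Pc [HPc HPcn]] Plow Prch Preach Pedge Plowp.
rewrite /= in Pidx Pv Pnew Pcnt HPc Plow Pedge Plowp.
have lsv : t_low s' v = t_low t v by apply: Plowp => /=; rewrite Jv.
have idxm : forall y n, t_idx t y = Some n -> t_idx s' y = Some n by exact: Pidx.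
have nv_t : forall y, t_idx s0 y == None -> t_idx t y = None -> newv t s' y -> (t_idx s0 y == None) && (t_idx s' y != None) /\ y != v.
  move=> y h0 ht /andP [_ h]; rewrite h0 h; split => //; apply/eqP => e; by rewrite e Jv in ht.
have Hu : upd (t_low s') v (minn (t_low s' v) (t_low s' w)) v = minn (t_low t v) (t_low s' w).
  by rewrite /upd eqxx lsv.
have Hlow4 : t_low (setlow s' v (minn (t_low s' v) (t_low s' w))) v = minn (t_low t v) (t_low s' w).
  by rewrite /= /upd eqxx lsv.
have idx0t : forall y, t_idx s0 y == None -> t_idx t y = None \/ (t_idx s0 y == None) && (t_idx t y != None).
  move=> y h0; case Ey: (t_idx t y) => [n|]; [by right; rewrite h0 | by left].
apply: IHws => //.
- constructor => //=.
  + by move=> y n /Jidx /idxm.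
  + by apply: idxm.
  + move=> y n h0 hs; case Ey: (t_idx t y) => [m|].
      by move: (idxm _ _ Ey); rewrite hs => -[->]; apply: Jnew Ey.
    have := Pnew _ _ Ey hs; lia.
  + lia.
  + exists (Pc ++ P); split; first by rewrite HPc HP catA.
    move=> y; rewrite mem_cat => /orP [yP|yP].
      have := HPcn _ yP; rewrite /newv /= => /andP [/eqP ht hs].
      have h0 : t_idx s0 y == None.
        case Ey0: (t_idx s0 y) => [n|] //; by rewrite (Jidx _ _ Ey0) in ht.
      apply: nv_t => //; by rewrite /newv ht hs.
    have [/andP [h0 ht] yv] := HPn _ yP; rewrite h0 yv; split => //.
    by case Ey: (t_idx t y) ht => [n|] //; rewrite (idxm _ _ Ey).
  + rewrite Hu; exact: leq_trans (geq_minl _ _) Jlowle.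
  + rewrite Hu; case: (leqP (t_low t v) (t_low s' w)) => h; first exact: Jlow.
    right; case: Plow => [[e _]|[u [k [uS ek lk cwu]]]].
      by move: Jcnt Jlowle h; rewrite e; lia.
    move: uS; rewrite HP mem_cat inE => /orP [uP|/orP [/eqP uv|uS0]].
    * have [/andP [/eqP h0 _] _] := HPn _ uP.
      have := Jnew _ _ h0 ek; move: Jlowle h; rewrite lk; lia.
    * by move: ek; rewrite uv Jv => -[ek]; move: Jlowle h; rewrite lk -ek; lia.
    have := I02 _ uS0; case Eu0: (t_idx s0 u) => [k'|] // _.
    move: (Jidx _ _ Eu0); rewrite ek => -[ek'].
    exists u, k; split => //; first by rewrite Eu0 ek'.
    apply: connect_trans cwu; apply: connect1; by rewrite /E /= Rvw wB.
  + move=> y /andP [h0 hs'] yv ys; case Ey: (t_idx t y) => [m|].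
      have yst : y \in t_stk t.
        move: ys; rewrite HPc mem_cat => /orP [yPc|//].
        by have := HPcn _ yPc; rewrite /newv /= Ey.
      have hyn : (t_idx s0 y == None) && (t_idx t y != None) by rewrite h0 Ey.
      have [u [k [k' [uS iu iy lt c]]]] := Jrch y hyn yv yst.
      exists u, k, k'; split => //; try exact: idxm.
      by rewrite HPc mem_cat uS orbT.
    have hyn : newv (bump t) s' y by rewrite /newv /= Ey hs'.
    exact: Prch hyn ys.
  + move=> y /andP [h0 hs']; case Ey: (t_idx t y) => [m|].
      by apply: Jreach; rewrite h0 Ey.
    apply: connect_trans (Preach _ _); first by apply: connect1; rewrite /E /= Rvw wB.
    by rewrite /newv /= Ey hs'.
  + move=> y z /andP [h0 hs'] yv eyz; rewrite Hu; case Ey: (t_idx t y) => [m|].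
      have hyn : (t_idx s0 y == None) && (t_idx t y != None) by rewrite h0 Ey.
      have [h1 h2] := Jedge y z hyn yv eyz; split.
        by case Ez: (t_idx t z) h1 => [n|] // _; rewrite (idxm _ _ Ez).
      move=> k hk hs; exact: leq_trans (geq_minl _ _) (h2 k hk hs).
    have hyn : newv (bump t) s' y by rewrite /newv /= Ey hs'.
    have [h1 h2] := Pedge y z hyn eyz; split => // k hk hs.
    apply: leq_trans (geq_minr _ _) (h2 k (Jidx _ _ hk) _).
    by rewrite HP mem_cat inE hs !orbT.
  + move=> y hy; rewrite /upd; case: (y =P v) => [e|_]; first by rewrite e Jv0 in hy.
    rewrite Plowp ?Jlowp //.
    by case Ey0: (t_idx s0 y) hy => [n|] // _; rewrite (Jidx _ _ Ey0).
  + exact: leq_trans (unv_mono idxm) Jfuel.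
- apply: Sc' => //=.
  + by rewrite Hu geq_minl.
  + move=> _; split; first by rewrite Pv.
    by move=> k hk; rewrite (Jidx _ _ hk) in Ew.
Qed.


Lemma visit_ok f : forall v s, Inv s -> unv s <= f -> t_idx s v = None ->
  vspec v s (tvisit R B A f v s).
Proof.
elim: f => [|f IHf] v s Is hf hv.
  have : 0 < unv s by apply/card_gt0P; exists v; rewrite inE hv.
  lia.
rewrite tvisitS.
have J1 := J_init Is hv hf.
have Hws : forall w, w \in adj R v -> R v w by move=> w; rewrite mem_adj.
have Sc0 : forall w, w \notin adj R v -> Scanned v s (s1of v s) w.
  by move=> w; rewrite mem_adj => hnR; rewrite /E /= => /andP [hR _]; rewrite hR in hnR.
have := @edges_ok f v s IHf (adj R v) (s1of v s) Hws J1 Sc0.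
case: (tedgesF f v (adj R v) (s1of v s)) => [b c|s2] //.
move=> [J2 Sc2].
have Is' := Is; case: Is' => I1 I2 I3 I4.
case: J2 => Ji Ji0 Jv0 Jidx Jv Jnew Jcnt [P [HP HPn]] Jlowle Jlow Jrch Jreach Jedge Jlowp Jfuel.
have Ji' := Ji; case: Ji' => /= K1 K2 K3 K4.
have vnP : v \notin P by apply/negP => /HPn [_ /eqP].
rewrite /popstep.
case: ifP => [/eqP hlow | hlow].
-
  have Hidx : index v (t_stk s2) = size P.
    by rewrite HP index_cat (negbTE vnP) /= eqxx addn0.
  have Htake : take (size P).+1 (t_stk s2) = P ++ [:: v].
    by rewrite HP take_cat ltnNge leqnSn /= subSn // subnn /= take0.
  have Hdrop : drop (size P).+1 (t_stk s2) = t_stk s.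
    by rewrite HP drop_cat ltnNge leqnSn /= subSn // subnn /= drop0.
  rewrite Hidx Htake Hdrop.
  set C := P ++ [:: v].
  have memC : forall y, y \in t_stk s2 = (y \in C) || (y \in t_stk s).
    by move=> y; rewrite HP /C -cat_rcons cats1 mem_cat.
  pose Q y := newv s s2 y \/ (t_idx s y != None /\ y \notin t_stk s).
  have closedQ : forall u w, Q u -> E u w -> Q w.
    move=> u w; rewrite /Q => -[hu|[hu1 hu2]] euw; last by right; exact: I3 hu1 hu2 euw.
    have [h1 h2] : t_idx s2 w != None /\ (forall k, t_idx s w = Some k -> w \in t_stk s -> t_low s2 v <= k).
      case: (u =P v) => [e|/eqP ne]; first by apply: Sc2; rewrite -e.
      exact: Jedge hu ne euw.
    case Ew: (t_idx s w) => [k|]; last by left; rewrite /newv Ew h1.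
    right; split; first by [].
    apply/negP => ws; have := h2 k Ew ws; have := I1 _ _ Ew; rewrite hlow; lia.
  have reachQ : forall y, connect E v y -> Q y.
    move=> y; apply: conn_closed closedQ _; left; by rewrite /newv hv Jv.
  have doneclosed : forall (t : tstate X), Inv t -> forall y z, t_idx t y != None -> y \notin t_stk t ->
     connect E y z -> t_idx t z != None /\ z \notin t_stk t.
    move=> t [_ _ T3 _] y z hy hny; apply: (@conn_closed (fun z => t_idx t z != None /\ z \notin t_stk t)) => //.
    by move=> u w [h1 h2] euw; exact: T3 h1 h2 euw.
  have hC2 : forall y, y \in C -> connect E v y.
    move=> y; rewrite mem_cat inE => /orP [yP|/eqP ->]; last exact: connect0.
    by apply: Jreach; have [] := HPn _ yP.
  have hC1 : forall y, y \in C -> connect E y v.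
    have : forall m y k, k < m -> t_idx s2 y = Some k -> y \in C -> connect E y v.
      elim=> [|m IHm] y k // hk hy; rewrite mem_cat inE => /orP [yP|/eqP ->]; last exact: connect0.
      have [hyn yv] := HPn _ yP.
      have ys : y \in t_stk s2 by rewrite memC mem_cat yP.
      have [u [k1 [k2 [uS iu iy lt c]]]] := Jrch _ hyn yv ys.
      suff cuv : connect E u v by exact: connect_trans c cuv.
      move: uS; rewrite memC => /orP [uC|uS].
        apply: (IHm u k1) => //; move: iy lt hk; rewrite hy => -[<-]; lia.
      have yC : y \in C by rewrite mem_cat yP.
      have := reachQ u (connect_trans (hC2 y yC) c).
      rewrite /Q; case=> [/andP [/eqP h _]|[_ h]]; last by rewrite uS in h.
      by have := I2 _ uS; rewrite h.
    move=> H y yC.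
    have ys : y \in t_stk s2 by rewrite memC yC.
    have := K2 _ ys; case Ey: (t_idx s2 y) => [k|] // _.
    exact: (H (t_cnt s2) y k (K1 _ _ Ey) Ey yC).
  have hC3 : forall y, connect E v y -> connect E y v -> y \in C.
    move=> y cvy cyv; case: (reachQ y cvy) => [/andP [/eqP h0 h2]|[h1 h2]].
      case ys: (y \in t_stk s2).
        by move: ys; rewrite memC => /orP [//|/I2]; rewrite h0.
      have [] := doneclosed s2 Ji y v h2 (negbT ys) cyv.
      by rewrite memC mem_cat inE eqxx orbT.
    have [] := doneclosed s Is y v h1 h2 cyv.
    by rewrite hv.
  case: ifP => [hA|hnA].
  +
    have [a0 a0C a0A] := hasP hA.
    split.
    * move=> /forallP HA a a' aA a'A.
      have := HA a; rewrite aA /= => aC.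
      have := HA a'; rewrite a'A /= => a'C.
      exact: connect_trans (hC1 _ aC) (hC2 _ a'C).
    * move=> gA; apply/forallP => a; apply/implyP => aA.
      apply: hC3.
        exact: connect_trans (hC2 _ a0C) (gA _ _ a0A aA).
      exact: connect_trans (gA _ _ aA a0A) (hC1 _ a0C).
  +
    have notA : forall y, y \in C -> y \notin A.
      by move=> y yC; apply/negP => yA; move/negbT/hasPn: hnA => /(_ y yC); rewrite yA.
    constructor => //=.
    * split => //=.
      - by move=> y /I2; case Ey: (t_idx s y) => [k|] // _; rewrite (Jidx _ _ Ey).
      - move=> y z hy hny eyz.
        case yC: (y \in C).
          have := reachQ z (connect_trans (hC2 _ yC) (connect1 eyz)).
          case=> [/andP [/eqP h0 h2]|[h1 h2]].
            split => //; apply/negP => /I2; by rewrite h0.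
          split => //; by case Ez: (t_idx s z) h1 => [k|] // _; rewrite (Jidx _ _ Ez).
        have hny2 : y \notin t_stk s2 by rewrite memC yC.
        have [h1 h2] := K3 _ _ hy hny2 eyz; split => //.
        by apply/negP => zs; move: h2; rewrite memC zs orbT.
      - move=> y yA hy; have := K4 _ yA hy; rewrite memC => /orP [yC|//].
        by have := notA _ yC; rewrite yA.
    * by exists [::].
    * by left.
    * move=> y /andP [/eqP h0 _] ys; by have := I2 _ ys; rewrite h0.
    * move=> y z hy eyz.
      have := reachQ z (connect_trans (Jreach y hy) (connect1 eyz)).
      rewrite /Q; case=> [/andP [/eqP h0 h2]|[h1 h2]].
        by split => // k; rewrite h0.
      split; first by case Ez: (t_idx s z) h1 => [k|] // _; rewrite (Jidx _ _ Ez).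
      by move=> k _ hs; rewrite hs in h2.
-
  have [u [k [uS iu lk cvu]]] : exists u k, [/\ u \in t_stk s, t_idx s u = Some k, t_low s2 v = k & connect E v u].
    by case: Jlow => // e; rewrite e eqxx in hlow.
  rewrite /vspec; constructor => //.
  + exists (P ++ [:: v]); split; first by rewrite HP -catA.
    move=> y; rewrite mem_cat inE => /orP [yP|/eqP ->]; first by have [] := HPn _ yP.
    by rewrite /newv hv Jv.
  + by right; exists u, k.
  + move=> y hy ys; case: (y =P v) => [->|/eqP yv]; last exact: Jrch y hy yv ys.
    exists u, k, (t_cnt s); split => //.
    * by rewrite HP mem_cat inE uS !orbT.
    * exact: Jidx.
    * exact: I1 iu.
  + move=> y z hy eyz; case: (y =P v) => [e|/eqP yv]; last exact: Jedge y z hy yv eyz.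
    by apply: Sc2; rewrite -e.
Qed.

Notation tinit0 := (@tinit X).

Lemma tarjan_ok x : x \in A -> ((tarjan_from R B A x).1 = true <-> goodA).
Proof.
move=> xA.
have I0 : Inv tinit0 by split.
have F0 : unv tinit0 <= #|X|.+1 by apply: leq_trans (max_card _) (leqnSn _).
have := visit_ok I0 F0 (erefl None : t_idx tinit0 x = None).
rewrite /tarjan_from; case: (tvisit _ _ _ _ _ _) => [b c|s'] //= Pv.
case: Pv => [[_ _ _ P4] _ Pv _ _ _ Plow _ _ _ _].
have hs : t_stk s' = [::].
  by case: Plow => [[_ ->]|[u [k [uS _ _ _]]]].
by have := P4 x xA; rewrite Pv hs => /(_ isT).
Qed.

Lemma pot_init : pot tinit0 = 3 * #|X| + \sum_(y : X) size (adj R y).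
Proof.
rewrite /pot /Psi /= add0n big_split /= sum_nat_const.
by rewrite add0n mulnC; congr (_ + _); apply: eq_bigl.
Qed.

Lemma tarjan_cost x : (tarjan_from R B A x).2 <= 3 * #|X| + \sum_(y : X) size (adj R y).
Proof.
have := cost_visit (#|X|.+1) (erefl None : t_idx tinit0 x = None).
rewrite -pot_init /tarjan_from /cost_spec; case: (tvisit _ _ _ _ _ _) => [b c|s'] //= ; rewrite /pot; lia.
Qed.

End Tar.

Lemma sz_adj (X : finType) (R : rel X) y : size (adj R y) = \sum_(w | R y w) 1.
Proof. by rewrite /adj -sum1_size big_filter enumT. Qed.

Lemma sum_adj (X : finType) (R : rel X) : \sum_(y : X) size (adj R y) = nedges R.
Proof.
rewrite /nedges -sum1dep_card.
under eq_bigr => y _ do rewrite sz_adj.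
rewrite pair_big_dep /=.
by apply: eq_bigl => -[a b].
Qed.

Lemma is_pathP (X : finType) (R : rel X) (p : nat -> X) :
  is_path R p <-> forall n, p n.+1 = p n \/ R (p n) (p n.+1).
Proof.
split.
- move=> hp n.
  have := hp (fun m => m = n) (p n.+1).
  case.
    by exists n.+1; split => //; right; exists n.
  + by move=> [m [-> ->]]; left.
  + by move=> [a [[m [-> <-]] h]]; right.
- move=> hp S y [n [[hn|[a [ha ->]]] <-]].
    by left; exists n.
  case: (hp a) => [->|h]; first by left; exists a.
  by right; exists (p a); split => //; exists a.
Qed.

Lemma csem_ext (AP : Type) (X : finType) (R : rel X) (V : AP -> {set X}) psi :
  forall P Q : X -> Prop, (forall x, P x <-> Q x) -> (csem R V psi P <-> csem R V psi Q).
Proof.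
elim: psi => [|g IHg|g IHg h IHh|phi g IHg|phi] P Q hPQ /=.
- by [].
- by rewrite (IHg P Q hPQ).
- by rewrite (IHg P Q hPQ) (IHh P Q hPQ).
- apply: IHg => x; split => -[h1 h2]; split => //; by apply/hPQ.
- split => -[B' [h1 h2]]; exists B'; split => // x hx; apply: h1; by apply/hPQ.
Qed.

Lemma conn_nth (X : finType) (e : rel X) z : forall p y j, path e y p -> j <= size p ->
  connect e y (nth z (y :: p) j) /\ connect e (nth z (y :: p) j) (last y p).
Proof.
elim=> [|a p IH] y j /=.
  by case: j => // _ _; split; apply: connect0.
move=> /andP [eya pth]; case: j => [_|j hj] /=.
  split; first exact: connect0.
  have [_ h] := IH a 0 pth (leq0n _).
  exact: connect_trans (connect1 eya) h.
have [h1 h2] := IH a j pth hj; split => //.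
exact: connect_trans (connect1 eya) h1.
Qed.

Lemma group_sem (AP : Type) (X : finType) (R : rel X) (V : AP -> {set X})
    (Bs A : {set X}) (phi : slcs AP) x :
  (forall y, y \in Bs <-> sem R V phi y) -> x \in A -> A \subset Bs ->
  (goodA R Bs A <-> exists B' : X -> Prop, (forall y, y \in A -> B' y) /\
     path_connected R B' /\ forall z, B' z -> sem R V phi z).
Proof.
move=> hs xA sAB; split.
- move=> gA; exists (fun y => connect (E R Bs) x y /\ connect (E R Bs) y x); split; last split.
  + by move=> y yA; split; apply: gA.
  + move=> y z [cxy cyx] [cxz czx].
    have /connectP [p pth ez] := connect_trans cyx cxz.
    exists (fun n => nth z (y :: p) n), (size p); split; last split; last split.
    * apply/is_pathP => n.
      case: (ltnP n (size p)) => hn.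
        right; move/pathP: pth => /(_ z n hn) /andP [h _]; exact: h.
      left; have e1 : nth z (y :: p) n.+1 = z by rewrite nth_default.
      rewrite e1; case: (leqP n (size p)) => h; last by rewrite nth_default.
      have -> : n = size p by apply/eqP; rewrite eqn_leq h hn.
      by rewrite -last_nth ez.
    * by [].
    * by rewrite -last_nth ez.
    * move=> j hj; have [h1 h2] := conn_nth z pth hj; rewrite -ez in h2; split.
      - exact: connect_trans cxy h1.
      - exact: connect_trans h2 czx.
  + move=> z [cxz _]; apply/hs.
    apply: (@conn_closed _ R Bs (fun y => y \in Bs)) cxz.
      by move=> u w _ /andP [].
    exact: (subsetP sAB).
- move=> [B' [hA [hpc hphi]]] a a' aA a'A.
  have [q [i [qp [q0 [qi hall]]]]] := hpc a a' (hA a aA) (hA a' a'A).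
  move/is_pathP: qp => qp.
  suff : forall j, j <= i -> connect (E R Bs) a (q j) by move/(_ i (leqnn i)); rewrite qi.
  elim=> [|j IHj] hj; first by rewrite q0 connect0.
  have := IHj (ltnW hj); case: (qp j) => [->|h] // c.
  apply: connect_trans c (connect1 _); rewrite /E /= h /=.
  by apply/hs; apply: hphi; apply: hall.
Qed.

Lemma arith_imp a b x s k c0 M : a <= (c0+7)*k*(M+1) -> b <= c0*s*M -> x <= M -> a + b + x.+1 <= (c0+7)*(s+k).+1*(M+1).
Proof. nia. Qed.
Lemma arith_grp b x s c0 M e r : b <= c0*s*M -> x + e <= M -> r <= 3 * x + e -> b + x + x + x.+1 + r <= (c0+7)*s.+1*(M+1).
Proof. nia. Qed.
Lemma arith_g0 x s c0 M : x <= M -> x.+1 <= (c0+7)*s.+1*(M+1).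
Proof. nia. Qed.
Lemma arith_g1 b x s c0 M : b <= c0*s*M -> x <= M -> b + x + x.+1 <= (c0+7)*s.+1*(M+1).
Proof. nia. Qed.

Theorem theorem6p4 :
  forall c0 : nat, exists c : nat,
  forall (AP : Type) (X : finType) (R : rel X) (V : AP -> {set X})
         (sat : slcs AP -> {set X}) (satc : slcs AP -> nat),
    (forall (phi : slcs AP) (x : X), x \in sat phi <-> sem R V phi x) ->
    (forall phi : slcs AP, satc phi <= c0 * ssize phi * (#|X| + nedges R)) ->
    forall (psi : cform AP) (A : {set X}),
      ((SatC R sat satc A psi).1 = true <-> csem R V psi (fun x => x \in A)) /\
      (SatC R sat satc A psi).2 <= c * csize psi * (#|X| + nedges R + 1).
Proof.
move=> c0; exists (c0 + 7) => AP X R V sat satc hsat hsatc psi.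
set N := #|X| + nedges R + 1.
have N1 : 1 <= N by rewrite /N addn1.
elim: psi => [|g IHg|g IHg h IHh|phi g IHg|phi] A /=.
- split => //; nia.
- have [h1 h2] := IHg A; split.
    case: (SatC R sat satc A g).1 h1 => /= h1.
    + split => [//|hn]; exfalso; apply: hn; exact/h1.
    + split => [_ hc|//]; by have := proj2 h1 hc.
  nia.
- have [h1 h2] := IHg A; have [h3 h4] := IHh A; split.
    rewrite -h1 -h3; by case: (SatC _ _ _ _ g).1; case: (SatC _ _ _ _ h).1; split => // -[].
  nia.
- have [h1 h2] := IHg (sat phi :&: A); split.
    rewrite h1; apply: csem_ext => x; rewrite inE; split => [/andP [e1 e2]|[e1 e2]].
      by split => //; apply/hsat.
    by rewrite e1 andbT; apply/hsat.
  rewrite /N in h2 *; exact: arith_imp h2 (hsatc phi) (leq_addr _ _).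
- case: (A =P set0) => [->|/eqP An0] /=.
    split.
      split => // _; exists (fun _ => False); split; first by move=> y; rewrite inE.
      by split => // y z [].
    exact: arith_g0 (leq_addr _ _).
  case: ifP => [nsub|/negbFE sub].
    split.
      rewrite /=; split => // -[B' [hA [_ hphi]]].
      suff hs : A \subset sat phi by rewrite hs in nsub.
      apply/subsetP => a aA.
      by apply/hsat; apply: hphi; apply: hA.
    exact: arith_g1 (hsatc phi) (leq_addr _ _).
  case: pickP => [x xA|none].
    split.
      apply: iff_trans (tarjan_ok _ _ xA) _.
      by apply: group_sem xA sub => y; apply: hsat.
    apply: arith_grp (hsatc phi) (leqnn _) _.
    by rewrite -sum_adj; apply: tarjan_cost.
  by case/set0Pn: An0 => a; rewrite none.
Qed.
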